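(* In the two-door cascading memoryless setting, every semi-fractional sequence $\pi$ has an integer sequence $\pi'$ such that $\mathbb{E}[\pi']\le\mathbb{E}[\pi]+1$.
   Context: Two cascading memoryless doors with durations: parameters $p_1,p_2\in(0,1)$, $q_1=1-p_1$, $q_2=1-p_2$, and $c>0$. Both doors start closed. A semi-fractional sequence is an infinite alternating sequence $1^{t_1}\,2\,1^{t_2}\,2\,1^{t_3}\,2\cdots$ with real $t_j\ge0$; equivalently it is given by a non-decreasing sequence of reals $0=\pi_0\le\pi_1\le\pi_2\le\cdots$ with $t_j=\pi_j-\pi_{j-1}$. A 1-knock $1^t$ takes $t$ time units and, if door 1 is closed, opens it with probability $1-q_1^t$, independently of everything else. A 2-knock takes $c$ time units and opens door 2 with probability $p_2$ (independently) if door 1 is open at that time, and with probability $0$ otherwise. There is no feedback. The running time is the time at which both doors are open (i.e. the end of the 2-knock that opens door 2; the $i$-th 2-knock ends at time $\pi_i+ci$), and $\mathbb{E}[\pi]$ denotes its expectation. An integer sequence is a semi-fractional sequence with all $\pi_i\in\mathbb{N}$ (equivalently, an ordinary sequence of unit-length knocks on door 1 and knocks on door 2). *)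

(* Defs.v *)
From HB Require Import structures.
From mathcomp Require Import all_boot all_order all_algebra.
From mathcomp Require Import all_classical all_reals all_analysis.
Set Implicit Arguments. Unset Strict Implicit. Unset Printing Implicit Defensive.
Import Order.TTheory GRing.Theory Num.Theory.
Local Open Scope ring_scope.

Section Doors.
Variable R : realType.

(* A semi-fractional sequence 1^{t_1} 2 1^{t_2} 2 ... is encoded by its
   cumulative 1-knock times  0 = pi 0 <= pi 1 <= pi 2 <= ...  *)
Definition semi_fractional (pi : nat -> R) : Prop :=
  pi 0%N = 0 /\ forall i, pi i <= pi i.+1.

Definition integer_sequence (pi : nat -> R) : Prop :=
  semi_fractional pi /\ forall i, exists k : nat, pi i = k%:R.

(* Probability that door 1 is open at the j-th 2-knock (j >= 1) for the
   first time, i.e. it was closed at the (j-1)-th 2-knock (1-knock time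
   pi (j-1)) and is open at the j-th (1-knock time pi j):
   q1^{pi_{j-1}} - q1^{pi_j}, with q1 = 1 - p1. *)
Definition door1_first_open (p1 : R) (pi : nat -> R) (j : nat) : R :=
  powR (1 - p1) (pi j.-1) - powR (1 - p1) (pi j).

(* Probability that both doors are open for the first time exactly at the
   end of the i-th 2-knock (i >= 1): door 1 first open at knock j <= i,
   then knocks j..i-1 on door 2 fail and knock i succeeds. *)
Definition success_at (p1 p2 : R) (pi : nat -> R) (i : nat) : R :=
  \sum_(1 <= j < i.+1) door1_first_open p1 pi j * (1 - p2) ^+ (i - j) * p2.

(* The i-th 2-knock ends
   at time pi_i + c i.  If with positive probability the doors never both
   open, the running time is +oo with positive probability and E = +oo
   (note +oo * 0 = 0 in \bar R). *)
Definition expected_time (p1 p2 c : R) (pi : nat -> R) : \bar R :=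
  (\sum_(1 <= i <oo) ((pi i + c * i%:R) * success_at p1 p2 pi i)%:E
   + +oo * (1%:E - \sum_(1 <= i <oo) (success_at p1 p2 pi i)%:E))%E.

End Doors.

(* Main.v *)
Require Import Defs.
From HB Require Import structures.
From mathcomp Require Import all_boot all_order all_algebra.
From mathcomp Require Import all_classical all_reals all_analysis.
From mathcomp Require Import ring lra.
Import Order.TTheory GRing.Theory Num.Theory.
Local Open Scope ring_scope.

Set Implicit Arguments.
Unset Strict Implicit.
Section Aux.
Variables (R : realType) (p1 p2 : R).
Hypothesis hp1 : 0 < p1 < 1.
Hypothesis hp2 : 0 < p2 < 1.

Definition Qd (pi : nat -> R) n := powR (1 - p1) (pi n).
Fixpoint Gd (pi : nat -> R) n :=
  if n is m.+1 then (1 - p2) * Gd pi m + p2 * Qd pi m else 1.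

Lemma success_H pi : pi 0%N = 0 ->
  forall i, success_at p1 p2 pi i = p2 * (Gd pi i - Qd pi i).
Proof.
move=> pi0; elim=> [|i IH].
  by rewrite /success_at big_geq // /Qd pi0 powRr0 /= subrr mulr0.
rewrite /success_at big_nat_recr //=.
have -> : \sum_(1 <= j < i.+1) door1_first_open p1 pi j * (1 - p2) ^+ (i.+1 - j) * p2
   = (1 - p2) * success_at p1 p2 pi i.
  rewrite /success_at big_distrr /=; apply: eq_big_nat => j /andP[_ hj].
  by rewrite subSn // exprS; ring.
rewrite IH subnn expr0 /door1_first_open /= /Qd; ring.
Qed.

Lemma success_G pi : pi 0%N = 0 ->
  forall i, success_at p1 p2 pi i = Gd pi i - Gd pi i.+1.
Proof. by move=> pi0 i; rewrite success_H //=; ring. Qed.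

Lemma Q_ge0 pi n : 0 <= Qd pi n.
Proof. exact: powR_ge0. Qed.

Lemma Q_noninc pi : semi_fractional pi -> forall n, Qd pi n.+1 <= Qd pi n.
Proof.
move=> [_ hm] n; rewrite /Qd; apply: ger_powR => //.
case/andP: hp1 => a b; apply/andP; split; lra.
Qed.

Lemma H_ge0 pi : semi_fractional pi -> forall n, Qd pi n <= Gd pi n.
Proof.
move=> hpi; have [pi0 _] := hpi; elim=> [|n IH].
  by rewrite /= /Qd pi0 powRr0.
rewrite /=; have := @Q_noninc pi hpi n; case/andP: hp2 => a b.
have : 0 <= (1 - p2) * (Gd pi n - Qd pi n) by apply: mulr_ge0; lra.
nra.
Qed.

Lemma G_ge0 pi : semi_fractional pi -> forall n, 0 <= Gd pi n.
Proof. by move=> hpi n; apply: le_trans (@H_ge0 pi hpi n); exact: Q_ge0. Qed.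

Lemma s_ge0 pi : semi_fractional pi -> forall n, 0 <= success_at p1 p2 pi n.
Proof.
move=> hpi n; rewrite success_H; last by case: hpi.
case/andP: hp2 => a b; apply: mulr_ge0; first lra.
by rewrite subr_ge0 (@H_ge0 pi hpi).
Qed.

Lemma G_noninc pi : semi_fractional pi -> forall n, Gd pi n.+1 <= Gd pi n.
Proof.
move=> hpi n; have := @s_ge0 pi hpi n; rewrite success_G; last by case: hpi.
by rewrite subr_ge0.
Qed.

Lemma G1 pi : pi 0%N = 0 -> Gd pi 1 = 1.
Proof. by move=> pi0; rewrite /= /Qd pi0 powRr0; ring. Qed.

Lemma sum_s pi : semi_fractional pi -> forall N,
  \sum_(1 <= i < N.+1) success_at p1 p2 pi i = 1 - Gd pi N.+1.
Proof.
move=> hpi; have [pi0 _] := hpi; elim=> [|N IH].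
  by rewrite big_geq // G1 // subrr.
by rewrite big_nat_recr //= IH success_G //=; ring.
Qed.

Lemma G_le pi pi' : pi 0%N = 0 -> (forall n, Qd pi' n <= Qd pi n) ->
  forall n, Gd pi' n <= Gd pi n.
Proof.
move=> _ hQ; elim=> [|n IH] //=.
case/andP: hp2 => a b.
have h1 : (1 - p2) * Gd pi' n <= (1 - p2) * Gd pi n by apply: ler_wpM2l; lra.
have h2 : p2 * Qd pi' n <= p2 * Qd pi n by apply: ler_wpM2l; [lra|exact: hQ].
lra.
Qed.

End Aux.

Lemma abel (R : realType) (f G : nat -> R) N :
  \sum_(1 <= i < N.+1) f i * (G i - G i.+1) =
  \sum_(1 <= n < N.+1) (f n - f n.-1) * G n - f N * G N.+1 + f 0%N * G 1%N.
Proof.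
elim: N => [|N IH]; first by rewrite !big_geq //; ring.
by rewrite !(big_nat_recr N.+1) //= IH; ring.
Qed.

Lemma ser_le (R : realType) (u : nat -> R) (x : \bar R) m :
  (forall n, 0 <= u n) -> (forall n, (\sum_(m <= i < n) (u i)%:E <= x)%E) ->
  (\sum_(m <= i <oo) (u i)%:E <= x)%E.
Proof.
move=> u0 h; apply: lime_le.
  by apply: is_cvg_ereal_nneg_natsum => n _; rewrite lee_fin.
by apply: nearW => n; exact: h.
Qed.

Lemma ser_mono (R : realType) (u v : nat -> R) m :
  (forall n, 0 <= u n) -> (forall n, 0 <= v n) ->
  (forall n, (\sum_(m <= i < n) (u i)%:E <= \sum_(m <= i < n) (v i)%:E)%E) ->
  (\sum_(m <= i <oo) (u i)%:E <= \sum_(m <= i <oo) (v i)%:E)%E.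
Proof.
move=> u0 v0 h; apply: lee_lim.
- by apply: is_cvg_ereal_nneg_natsum => n _; rewrite lee_fin.
- by apply: is_cvg_ereal_nneg_natsum => n _; rewrite lee_fin.
by apply: nearW => n; exact: h.
Qed.

Lemma ser_ge0 (R : realType) (u : nat -> R) m :
  (forall n, 0 <= u n) -> (0 <= \sum_(m <= i <oo) (u i)%:E)%E.
Proof.
move=> u0; apply: lime_ge.
  by apply: is_cvg_ereal_nneg_natsum => n _; rewrite lee_fin.
by apply: nearW => n; rewrite sumEFin lee_fin; apply: sumr_ge0 => i _.
Qed.

Lemma ser_part (R : realType) (u : nat -> R) m n :
  (forall n, 0 <= u n) -> (\sum_(m <= i < n) (u i)%:E <= \sum_(m <= i <oo) (u i)%:E)%E.
Proof.
move=> u0; apply: (@nneseries_lim_ge R (fun i => (u i)%:E) xpredT m n).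
by move=> k _ _; rewrite lee_fin.
Qed.

Section MainSec.
Variables (R : realType) (p1 p2 c : R).
Hypothesis hp1 : 0 < p1 < 1.
Hypothesis hp2 : 0 < p2 < 1.
Hypothesis hc : 0 < c.
Variables (pi pi' : nat -> R).
Hypothesis hpi : semi_fractional pi.
Hypothesis hpi' : semi_fractional pi'.
Hypothesis hQ : forall n, Qd p1 pi' n <= Qd p1 pi n.
Hypothesis hup : forall n, pi' n <= pi n + 1.

Let f n := pi n + c * n%:R.

Lemma f_mono : {homo f : i j / (i <= j)%N >-> i <= j}.
Proof.
apply: homo_leq => //; first by move=> y x z; exact: le_trans.
move=> i; rewrite /f; have [_ h] := hpi.
have : c * i%:R <= c * i.+1%:R by apply: ler_wpM2l; [exact: ltW | rewrite ler_nat].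
have := h i; lra.
Qed.

Lemma f0 : f 0%N = 0.
Proof. by rewrite /f; case: hpi => -> _; rewrite mulr0 addr0. Qed.

Lemma f_ge0 n : 0 <= f n.
Proof. by rewrite -f0; apply: f_mono. Qed.

Lemma Klem N :
  \sum_(1 <= i < N.+1) (pi' i + c * i%:R) * success_at p1 p2 pi' i <=
  \sum_(1 <= i < N.+1) f i * success_at p1 p2 pi i + f N * Gd p1 p2 pi N.+1 + 1.
Proof.
have [pi0 _] := hpi; have [pi'0 _] := hpi'.
apply: (@le_trans _ _ (\sum_(1 <= i < N.+1) (f i + 1) *
   (Gd p1 p2 pi' i - Gd p1 p2 pi' i.+1))).
  apply: ler_sum_nat => i _; rewrite -success_G //.
  apply: ler_wpM2r.
  exact: (s_ge0 hp1 hp2 hpi').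
  by rewrite /f; have := hup i; lra.
rewrite abel.
have -> : \sum_(1 <= i < N.+1) f i * success_at p1 p2 pi i =
          \sum_(1 <= i < N.+1) f i * (Gd p1 p2 pi i - Gd p1 p2 pi i.+1).
  by apply: eq_bigr => i _; rewrite success_G.
rewrite abel f0 G1 // G1 //.
have hs : \sum_(1 <= n < N.+1) (f n + 1 - (f n.-1 + 1)) * Gd p1 p2 pi' n <=
          \sum_(1 <= n < N.+1) (f n - f n.-1) * Gd p1 p2 pi n.
  apply: ler_sum_nat => n _.
  have -> : f n + 1 - (f n.-1 + 1) = f n - f n.-1 by ring.
  apply: ler_wpM2l; first by rewrite subr_ge0; apply: f_mono; exact: leq_pred.
  exact: (G_le hp2 pi0 hQ).
have h2 : 0 <= (f N + 1) * Gd p1 p2 pi' N.+1.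
  apply: mulr_ge0; last exact: (G_ge0 hp1 hp2 hpi').
  by have := f_ge0 N; lra.
lra.
Qed.

Lemma Tlem N M : (N <= M)%N ->
  \sum_(1 <= i < N.+1) f i * success_at p1 p2 pi i + f N * Gd p1 p2 pi N.+1 <=
  \sum_(1 <= i < M.+1) f i * success_at p1 p2 pi i + f N * Gd p1 p2 pi M.+1.
Proof.
have [pi0 _] := hpi.
move=> /subnKC <-; elim: (M - N)%N => [|k IH]; first by rewrite addn0.
rewrite addnS.
have -> : \sum_(1 <= i < (N + k).+2) f i * success_at p1 p2 pi i =
  \sum_(1 <= i < (N + k).+1) f i * success_at p1 p2 pi i +
  f (N + k).+1 * success_at p1 p2 pi (N + k).+1 by rewrite big_nat_recr.
have := success_G p1 p2 pi0 (N + k).+1.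
have := s_ge0 hp1 hp2 hpi (N + k).+1.
move=> s0 se.
have : f N * success_at p1 p2 pi (N + k).+1 <= f (N + k).+1 * success_at p1 p2 pi (N + k).+1.
  by apply: ler_wpM2r => //; apply: f_mono; apply: leqW; rewrite leq_addr.
have e : f N * Gd p1 p2 pi (N + k).+1 = f N * Gd p1 p2 pi (N + k).+2 +
     f N * success_at p1 p2 pi (N + k).+1 by rewrite se; ring.
move=> hle; lra.
Qed.

End MainSec.
Unset Implicit Arguments.
Set Strict Implicit.

Lemma ceil_facts {R : realType} (x : R) :
  x <= (Num.ceil x)%:~R /\ (Num.ceil x)%:~R <= x + 1.
Proof.
case/andP: (ceil_itv x) => h1 h2; split => //.
move: h1; rewrite rmorphB /=; lra.
Qed.

Lemma inf_case {R : realType} (a s : \bar R) :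
  (0 <= a)%E -> (0 <= s)%E -> (s < 1%:E)%E -> (a + +oo * (1%:E - s) = +oo)%E.
Proof.
move=> a0; case: s => [r| |] s0 s1; [|by rewrite ltNge leey in s1|by []].
rewrite gt0_mulye; last by rewrite -EFinB lte_fin; rewrite lte_fin in s1; lra.
by rewrite addey // gt_eqF // (lt_le_trans _ a0).
Qed.

Theorem mainTheorem10 (R : realType) (p1 p2 c : R)
  (hp1 : 0 < p1 < 1) (hp2 : 0 < p2 < 1) (hc : 0 < c)
  (pi : nat -> R) (hpi : semi_fractional pi) :
  exists pi' : nat -> R, integer_sequence pi' /\
    (expected_time p1 p2 c pi' <= expected_time p1 p2 c pi + 1%:E)%E.
Proof.
have [pi0 pim] := hpi.
have pige0 : forall n, 0 <= pi n.
  move=> n; rewrite -pi0; apply: (homo_leq (r := fun x y : R => x <= y)) => //.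
  by move=> y x z; exact: le_trans.
pose pi' i : R := (Num.ceil (pi i))%:~R.
have hpi' : semi_fractional pi'.
  split; first by rewrite /pi' pi0 ceil0.
  by move=> i; rewrite /pi' ler_int le_ceil_tmp.
exists pi'; split.
  split => // i; exists `|Num.ceil (pi i)|%N.
  rewrite natr_absz ger0_norm // ceil_ge0; have := pige0 i; lra.
have hQ : forall n, Qd p1 pi' n <= Qd p1 pi n.
  move=> n; rewrite /Qd; apply: ger_powR; last by case: (ceil_facts (pi n)).
  case/andP: hp1 => a b; apply/andP; split; lra.
have hup : forall n, pi' n <= pi n + 1 by move=> n; case: (ceil_facts (pi n)).
have s0 := s_ge0 hp1 hp2 hpi.
have s0' := s_ge0 hp1 hp2 hpi'.
have hSS1 : forall p, semi_fractional p ->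
   (\sum_(1 <= i <oo) (success_at p1 p2 p i)%:E <= 1%:E)%E.
  move=> p hp; apply: ser_le; first exact: s_ge0.
  case=> [|N]; first by rewrite big_geq.
  rewrite sumEFin sum_s // lee_fin; have := G_ge0 hp1 hp2 hp N.+1; lra.
have SA0 : (0 <= \sum_(1 <= i <oo) ((pi i + c * i%:R) * success_at p1 p2 pi i)%:E)%E.
  apply: ser_ge0 => n; apply: mulr_ge0 => //.
  by apply: addr_ge0 => //; apply: mulr_ge0; [exact: ltW|].
rewrite /expected_time.
have [hS1|hSlt] := eqVneq (\sum_(1 <= i <oo) (success_at p1 p2 pi i)%:E)%E 1%:E; last first.
  have hlt : (\sum_(1 <= i <oo) (success_at p1 p2 pi i)%:E < 1%:E)%E.
    by rewrite lt_neqAle hSlt hSS1.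
  rewrite (@inf_case _ _ _ SA0 (ser_ge0 1 s0) hlt) addye ?leey //.
have hS1' : (\sum_(1 <= i <oo) (success_at p1 p2 pi' i)%:E)%E = 1%:E.
  apply/le_anti/andP; split; first exact: hSS1.
  rewrite -hS1; apply: ser_mono => //.
  case=> [|N]; first by rewrite !big_geq.
  rewrite !sumEFin !sum_s // lee_fin.
  have := G_le hp2 pi0 hQ N.+1; lra.
rewrite hS1 hS1' -EFinB subrr mule0 !adde0.
have [/eqP hinf|hfin] := boolP (\sum_(1 <= i <oo) ((pi i + c * i%:R) * success_at p1 p2 pi i)%:E == +oo)%E.
  by rewrite hinf addye ?leey.
have hfn : (\sum_(1 <= i <oo) ((pi i + c * i%:R) * success_at p1 p2 pi i)%:E)%E \is a fin_num.
  by rewrite ge0_fin_numE // lt_neqAle hfin leey.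
have L0 := fine_ge0 SA0.
have hpart := fun n => ser_part 1 n (fun n => mulr_ge0 (addr_ge0 (pige0 n) (mulr_ge0 (ltW hc) (ler0n R n))) (s0 n)).
rewrite -(fineK hfn) in hpart *.
set L := fine _ in hpart L0 *.
have fge0 : forall N, 0 <= pi N + c * N%:R.
  by move=> N; apply: addr_ge0 => //; apply: mulr_ge0; [exact: ltW|].
have claimB : forall N, \sum_(1 <= i < N.+1) (pi i + c * i%:R) * success_at p1 p2 pi i
     + (pi N + c * N%:R) * Gd p1 p2 pi N.+1 <= L.
  move=> N; rewrite leNgt; apply/negP => hlt.
  set B := (X in L < X) in hlt.
  pose eps := (B - L) / (pi N + c * N%:R + 1).
  have hden : 0 < pi N + c * N%:R + 1 by have := fge0 N; lra.
  have epos : 0 < eps by apply: divr_gt0 => //; lra.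
  have [[M hM]|hno] := pselect (exists M, Gd p1 p2 pi M.+1 < eps); last first.
    have he1 : eps <= 1.
      have : ~ (Gd p1 p2 pi 1 < eps) by move=> h; apply: hno; exists 0%N.
      by move/negP; rewrite -leNgt G1.
    have : (\sum_(1 <= i <oo) (success_at p1 p2 pi i)%:E <= (1 - eps)%:E)%E.
      apply: ser_le => //; case=> [|K]; first by rewrite big_geq // lee_fin; lra.
      rewrite sumEFin sum_s // lee_fin.
      have : ~ (Gd p1 p2 pi K.+1 < eps) by move=> h; apply: hno; exists K.
      move/negP; rewrite -leNgt; lra.
    by rewrite hS1 lee_fin; lra.
  have hGM : Gd p1 p2 pi (maxn M N).+1 <= Gd p1 p2 pi M.+1.
    apply: (homo_leq (f := fun n => Gd p1 p2 pi n.+1) (r := fun x y : R => y <= x)) => //.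
    - by move=> y x z h1 h2; exact: le_trans h2 h1.
    - by move=> i; exact: (G_noninc hp1 hp2 hpi).
    - by rewrite leq_maxl.
  have hT := Tlem hp1 hp2 hc hpi (leq_maxr M N).
  have hP := hpart (maxn M N).+1; rewrite sumEFin lee_fin in hP.
  have hm : (pi N + c * N%:R) * Gd p1 p2 pi (maxn M N).+1 <= (pi N + c * N%:R) * eps.
    apply: ler_wpM2l; first exact: fge0.
    exact: le_trans hGM (ltW hM).
  have he : (pi N + c * N%:R + 1) * eps = B - L by rewrite /eps mulrC divfK // gt_eqF.
  have : (pi N + c * N%:R) * eps < (pi N + c * N%:R + 1) * eps.
    by rewrite ltr_pM2r //; lra.
  rewrite /B in he hlt; lra.
apply: ser_le.
  move=> n; apply: mulr_ge0; last exact: s0'.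
  apply: addr_ge0; last by apply: mulr_ge0; [exact: ltW|].
  by case: (ceil_facts (pi n)) => h _; apply: le_trans h.
case=> [|N]; first by rewrite big_geq // -EFinD lee_fin; lra.
rewrite sumEFin -EFinD lee_fin.
have hK := Klem hp1 hp2 hc hpi hpi' hQ hup N.
have := claimB N; lra.
Qed.
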